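(* Let $X$ be a Banach space, let $\varphi: X\to(-\infty,\infty]$ be a proper lower semicontinuous function, let $\bar{x}\in\operatorname{dom}\varphi$, and let $\bar{x}^*\in X^*$. The following are equivalent: (i) $\varphi$ is prox-bounded and $\bar{x}^*$ is a proximal subgradient of $\varphi$ at $\bar{x}$; (ii) $P_\lambda^{\bar{x}^*}\varphi(\bar{x}) = \{\bar{x}\}$ for some $\lambda>0$; (iii) $P_\lambda^{\bar{x}^*}\varphi(\bar{x}) = \{\bar{x}\}$ for all $\lambda>0$ sufficiently small.
   Context: $\varphi$ is prox-bounded if there exist $\alpha,\beta\in\mathbb{R}$ and $x_0\in X$ with $\varphi(x)\ge \alpha\|x-x_0\|^2+\beta$ for all $x\in X$. $\bar{x}^*\in X^*$ is a proximal subgradient of $\varphi$ at $\bar{x}\in\operatorname{dom}\varphi$ if there exist $r>0$ and $\varepsilon>0$ such that $\varphi(x)\ge\varphi(\bar{x})+\langle\bar{x}^*,x-\bar{x}\rangle-\frac{r}{2}\|x-\bar{x}\|^2$ for all $x$ in the open ball of radius $\varepsilon$ centered at $\bar{x}$. For $x^*\in X^*$ and $\lambda>0$, the $x^*$-proximal mapping is $P_\lambda^{x^*}\varphi(x) := \operatorname{argmin}_{w\in X}\{\varphi(w)-\langle x^*,w\rangle+\frac{1}{2\lambda}\|w-x\|^2\}$, $x\in X$. *)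

(* Defs.v *)
From HB Require Import structures.
From mathcomp Require Import all_boot all_order all_algebra.
From mathcomp Require Import all_classical all_reals all_analysis.
Set Implicit Arguments. Unset Strict Implicit. Unset Printing Implicit Defensive.
Import Order.TTheory GRing.Theory Num.Theory.
Import numFieldNormedType.Exports.
Local Open Scope classical_set_scope.
Local Open Scope ring_scope.

(* Setting: X a Banach space over a realType R (completeNormedModType),
   phi : X -> \bar R, and elements of X^* are continuous linear maps
   X -> R (represented as {linear X -> R^o} plus a continuity hypothesis). *)

Definition proper_fun (R : realType) (X : normedModType R) (phi : X -> \bar R) :=
  (forall x, phi x != -oo%E) /\ (exists x, phi x != +oo%E).

Definition dom_fun (R : realType) (X : normedModType R) (phi : X -> \bar R) :=
  [set x | phi x < +oo]%E.

Definition prox_bounded (R : realType) (X : normedModType R) (phi : X -> \bar R) :=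
  exists (alpha beta : R) (x0 : X),
    forall x, ((alpha * `|x - x0| ^+ 2 + beta)%:E <= phi x)%E.

Definition proximal_subgradient (R : realType) (X : normedModType R)
  (phi : X -> \bar R) (xbar : X) (xs : X -> R) :=
  exists r eps : R, 0 < r /\ 0 < eps /\
    forall x, ball xbar eps x ->
      (phi xbar + (xs (x - xbar) - r / 2 * `|x - xbar| ^+ 2)%:E <= phi x)%E.

Definition prox_map (R : realType) (X : normedModType R)
  (phi : X -> \bar R) (xs : X -> R) (lambda : R) (x : X) : set X :=
  let F := fun w => (phi w + (- xs w + (2 * lambda)^-1 * `|w - x| ^+ 2)%:E)%E in
  [set w | forall u, (F w <= F u)%E].

(* Main.v *)
Set Warnings "-all".
Require Import Defs.
From HB Require Import structures.
From mathcomp Require Import all_boot all_order all_algebra.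
From mathcomp Require Import all_classical all_reals all_analysis.
From mathcomp Require Import ring lra.
Import Order.TTheory GRing.Theory Num.Theory.
Import numFieldNormedType.Exports.
Local Open Scope classical_set_scope.
Local Open Scope ring_scope.

Lemma prox_char (R : realType) (X : completeNormedModType R)
  (phi : X -> \bar R) (xbar : X) (f : X -> R) (lam p : R) :
  (forall x, phi x != -oo%E) -> phi xbar = p%:E ->
  (forall u q, u != xbar -> phi u = q%:E ->
     p - f xbar < q - f u + (2 * lam)^-1 * `|u - xbar| ^+ 2) ->
  prox_map phi f lam xbar = [set xbar].
Proof.
move=> ninf Hp H.
have z0 : - f xbar + (2 * lam)^-1 * `|xbar - xbar| ^+ 2 = - f xbar.
  by rewrite subrr normr0 expr2 !mulr0 addr0.
apply/seteqP; split => w /=.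
- move=> Hw; have [->//|ne] := eqVneq w xbar.
  have := Hw xbar; rewrite Hp z0.
  case E: (phi w) => [q| |] /=.
  + rewrite -EFinD lee_fin => le; have h := H _ _ ne E; exfalso; clear -le h; lra.
  + by rewrite leye_eq.
  + by have := ninf w; rewrite E.
- move=> -> u; rewrite Hp z0.
  case E: (phi u) => [q| |] /=.
  + rewrite -EFinD lee_fin; case: (eqVneq u xbar) => [eu|ne].
      by move: E; rewrite eu Hp => -[<-]; rewrite z0.
    apply: ltW; have h := H _ _ ne E; clear -h; lra.
  + by rewrite addye ?leey.
  + by have := ninf u; rewrite E.
Qed.

Lemma dir_iii_ii (R : realType) (X : completeNormedModType R)
  (phi : X -> \bar R) (xbar : X) (f : X -> R) :
  (exists lambda0 : R, 0 < lambda0 /\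
           forall lambda : R, 0 < lambda -> lambda < lambda0 ->
             prox_map phi f lambda xbar = [set xbar]) ->
  (exists lambda : R, 0 < lambda /\ prox_map phi f lambda xbar = [set xbar]).
Proof.
move=> [l0 [l0p H]]; exists (l0 / 2); split; first by lra.
apply: H; lra.
Qed.

Lemma fin_of (R : realType) (X : completeNormedModType R)
  (phi : X -> \bar R) (xbar : X) :
  (forall x, phi x != -oo%E) -> dom_fun phi xbar -> exists p : R, phi xbar = p%:E.
Proof.
move=> ninf; rewrite /dom_fun /=; case E: (phi xbar) => [p| |]; first by exists p.
  by rewrite ltxx.
by have := ninf xbar; rewrite E.
Qed.

Lemma dir_ii_i (R : realType) (X : completeNormedModType R)
  (phi : X -> \bar R) (xbar : X) (f : X -> R) (k : R) :
  (forall x, phi x != -oo%E) -> dom_fun phi xbar ->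
  (forall v, `|f v| <= k * `|v|) -> (forall u v, f (u - v) = f u - f v) ->
  (exists lambda : R, 0 < lambda /\ prox_map phi f lambda xbar = [set xbar]) ->
  prox_bounded phi /\ proximal_subgradient phi xbar f.
Proof.
move=> ninf dom hk hlin [lam [lp Hpm]].
have [p Hp] := fin_of _ _ _ _ ninf dom.
have Hx : prox_map phi f lam xbar xbar by rewrite Hpm.
have z0 : - f xbar + (2 * lam)^-1 * `|xbar - xbar| ^+ 2 = - f xbar.
  by rewrite subrr normr0 expr2 !mulr0 addr0.
have ceq : lam^-1 / 2 = (2 * lam)^-1 by rewrite invfM mulrC.
set c := (2 * lam)^-1 in ceq.
have key : forall u q, phi u = q%:E ->
    p + (f (u - xbar) - c * `|u - xbar| ^+ 2) <= q.
  move=> u q E; have := Hx u; rewrite Hp z0 E -EFinD lee_fin hlin.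
  rewrite -/c; clear; lra.
split.
- exists (-(c + 1)), (p - k ^+ 2 / 4), xbar => x.
  case E: (phi x) => [q| |].
  + rewrite lee_fin; have := key _ _ E.
    move: (hk (x - xbar)); rewrite ler_norml => /andP[h1 _].
    set d := `|x - xbar|.
    have sq : 0 <= d ^+ 2 - k * d + k ^+ 2 / 4.
      have -> : d ^+ 2 - k * d + k ^+ 2 / 4 = (d - k / 2) ^+ 2 by rewrite !expr2; field.
      exact: sqr_ge0.
    move: h1 sq; move: (f (x - xbar)) => F h1 sq h2.
    rewrite -/d in h1; clear -h1 sq h2; lra.
  + by rewrite leey.
  + by have := ninf x; rewrite E.
- exists lam^-1, 1; split; first by rewrite invr_gt0.
  split; first by [].
  move=> x _; rewrite Hp; case E: (phi x) => [q| |].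
  + rewrite -EFinD lee_fin ceq; exact: key.
  + by rewrite leey.
  + by have := ninf x; rewrite E.
Qed.

Lemma dir_i_iii (R : realType) (X : completeNormedModType R)
  (phi : X -> \bar R) (xbar : X) (f : X -> R) (k : R) :
  (forall x, phi x != -oo%E) -> dom_fun phi xbar -> 0 < k ->
  (forall v, `|f v| <= k * `|v|) -> (forall u v, f (u - v) = f u - f v) ->
  prox_bounded phi /\ proximal_subgradient phi xbar f ->
  (exists lambda0 : R, 0 < lambda0 /\
           forall lambda : R, 0 < lambda -> lambda < lambda0 ->
             prox_map phi f lambda xbar = [set xbar]).
Proof.
move=> ninf dom kp hk hlin [[al [be [x0 Hb]]] [r [eps [rp [ep Hs]]]]].
have [p Hp] := fin_of _ _ _ _ ninf dom.
set a := `|al|. set cc := `|xbar - x0|.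
set K := `|p - be| + 2 * a * cc ^+ 2.
set M := k / eps + K / eps ^+ 2.
set L := r + 4 * a + 2 * M + 1.
have a0 : 0 <= a by apply: normr_ge0.
have cc0 : 0 <= cc by apply: normr_ge0.
have K0 : 0 <= K by rewrite /K addr_ge0 // mulr_ge0 // ?mulr_ge0 // sqr_ge0.
have M0 : 0 <= M.
  rewrite /M; apply: addr_ge0; apply: divr_ge0 => //; try exact: ltW; exact: exprn_ge0 (ltW ep).
have Lp : 0 < L by rewrite /L; lra.
exists L^-1; split; first by rewrite invr_gt0.
move=> lam lp llt.
have hL : L < lam^-1.
  by rewrite -[X in X < _](invrK L) ltf_pV2 ?posrE ?invr_gt0.
have meq : (2 * lam)^-1 = lam^-1 / 2 by rewrite invfM mulrC.
apply: (@prox_char R X phi xbar f lam p ninf Hp).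
move=> u q ne Hq.
have dp : 0 < `|u - xbar| by rewrite normr_gt0 subr_eq0.
rewrite meq.
have hl := hlin u xbar.
have hf : f (u - xbar) <= k * `|u - xbar|.
  by move: (hk (u - xbar)); rewrite ler_norml => /andP[].
set d := `|u - xbar| in dp hf *.
have dd : 0 < d ^+ 2 by apply: exprn_gt0.
case: (ltP d eps) => hde.
- have hb : ball xbar eps u by rewrite -ball_normE /= distrC.
  have := Hs u hb; rewrite Hp Hq -EFinD lee_fin -/d => h.
  have hpos : 0 < (lam^-1 / 2 - r / 2) * d ^+ 2.
    apply: mulr_gt0 => //; rewrite /L in hL; lra.
  clear -h hl hpos; lra.
- have := Hb u; rewrite Hq lee_fin => hb.
  have ue : u - x0 = (u - xbar) + (xbar - x0) by rewrite addrA subrK.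
  have he : `|u - x0| <= d + cc by rewrite ue ler_normD.
  set e := `|u - x0| in he hb.
  have e0 : 0 <= e by apply: normr_ge0.
  have he2 : e ^+ 2 <= 2 * d ^+ 2 + 2 * cc ^+ 2.
    have h1 : e ^+ 2 <= (d + cc) ^+ 2.
      by apply: lerXn2r; rewrite ?nnegrE // addr_ge0 // ltW.
    have sq : 0 <= (d - cc) ^+ 2 by apply: sqr_ge0.
    have ex1 : (d - cc) ^+ 2 = d ^+ 2 - 2 * d * cc + cc ^+ 2 by ring.
    have ex2 : (d + cc) ^+ 2 = d ^+ 2 + 2 * d * cc + cc ^+ 2 by ring.
    rewrite ex1 in sq; rewrite ex2 in h1; lra.
  have hal : - a <= al.
    by have := lexx a; rewrite {1}/a ler_norml => /andP[].
  have t1 : - a * e ^+ 2 <= al * e ^+ 2 := ler_wpM2r (sqr_ge0 _) hal.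
  have t2 : a * e ^+ 2 <= a * (2 * d ^+ 2 + 2 * cc ^+ 2) := ler_wpM2l a0 he2.
  have ht : k * d + K <= M * d ^+ 2.
    set t := d / eps.
    have t1' : 1 <= t by rewrite /t ler_pdivlMr // mul1r.
    have Mid : M * d ^+ 2 = k * d * t + K * t ^+ 2.
      rewrite /M /t; field; exact: lt0r_neq0.
    have kd : 0 <= k * d by rewrite mulr_ge0 // ltW.
    have g1 : k * d <= k * d * t := ler_peMr kd t1'.
    have tt : 1 <= t ^+ 2 by rewrite expr2; apply: (le_trans t1'); exact: ler_peMr (le_trans ler01 t1') t1'.
    have g2 : K <= K * t ^+ 2 := ler_peMr K0 tt.
    rewrite Mid; lra.
  have hm : (r / 2 + 2 * a + M + 1 / 2) * d ^+ 2 <= lam^-1 / 2 * d ^+ 2.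
    apply: ler_wpM2r; first exact: sqr_ge0.
    rewrite /L in hL; lra.
  have rd : 0 <= r * d ^+ 2 by rewrite mulr_ge0 // ltW.
  have Kb : p - be + 2 * a * cc ^+ 2 <= K.
    by rewrite /K; have := ler_norm (p - be); lra.
  clear -hb t1 t2 hm hf hl ht Kb rd dd; lra.
Qed.

Theorem lemma4p2 (R : realType) (X : completeNormedModType R)
  (phi : X -> \bar R) (xbar : X) (xs : {linear X -> R^o}) :
  proper_fun phi -> lower_semicontinuous phi -> continuous xs ->
  dom_fun phi xbar ->
  [/\ (prox_bounded phi /\ proximal_subgradient phi xbar xs) <->
        (exists lambda : R, 0 < lambda /\ prox_map phi xs lambda xbar = [set xbar]),
      (exists lambda : R, 0 < lambda /\ prox_map phi xs lambda xbar = [set xbar]) <->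
        (exists lambda0 : R, 0 < lambda0 /\
           forall lambda : R, 0 < lambda -> lambda < lambda0 ->
             prox_map phi xs lambda xbar = [set xbar]) &
      (prox_bounded phi /\ proximal_subgradient phi xbar xs) <->
        (exists lambda0 : R, 0 < lambda0 /\
           forall lambda : R, 0 < lambda -> lambda < lambda0 ->
             prox_map phi xs lambda xbar = [set xbar])].
Proof.
move=> [ninf _] _ cont dom.
have [k kp hk] := linear_lipschitz cont.
have hk' : forall v, `|(xs : X -> R) v| <= k * `|v| := hk.
have hl : forall u v, (xs : X -> R) (u - v) = (xs : X -> R) u - (xs : X -> R) v.
  by move=> u v; exact: linearB.
have A := dir_i_iii _ _ _ _ _ _ ninf dom kp hk' hl.
have B := dir_ii_i _ _ _ _ _ _ ninf dom hk' hl.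
have C := @dir_iii_ii R X phi xbar xs.
split; split; auto.
Qed.
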